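(* Let $0\le\theta_1<\theta_2\le\frac{\pi}{2}$ and $d=\lceil\frac{1}{\theta_2-\theta_1}\rceil$. Define the grid point $p=P_1(\theta_1,\theta_2)$ by: (i) if $\theta_2-\theta_1>\frac{\pi}{4}$: $p=(1,1)$; (ii) if $\arctan(\frac12)<\theta_2-\theta_1\le\frac{\pi}{4}$: $p=(1,2)$ if $\theta_1\ge\frac{\pi}{4}$; $p=(1,1)$ if $\arctan(\frac12)\le\theta_1<\frac{\pi}{4}$; $p=(2,1)$ if $\theta_1<\arctan(\frac12)$; (iii) if $\theta_2-\theta_1\le\arctan(\frac12)$: $p=(d,\lfloor\tan(\theta_1)\,d+1\rfloor)$ if $\theta_2\le\frac{\pi}{4}$; $p=(1,1)$ if $\theta_1<\frac{\pi}{4}<\theta_2$; $p=(\lfloor\tan(\frac{\pi}{2}-\theta_2)\,d+1\rfloor,d)$ if $\theta_1\ge\frac{\pi}{4}$. Then the segment $e$ from $(0,0)$ to $p$ satisfies $\theta_1<slope(e)<\theta_2$, and, writing $p=(x,y)$, we have $\max(x,y)\le\frac{\pi}{2}\cdot\frac{1}{\theta_2-\theta_1}$.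
   Context: The slope of a segment from $(0,0)$ to a point $p\neq(0,0)$ is the angle (mod $2\pi$) of the counter-clockwise rotation taking the positive $x$-axis onto the half-line from the origin through $p$. *)

(* Defs.v *)
From Stdlib Require Import Reals ZArith.
Open Scope R_scope.

(* floor and ceiling on R (Int_part r = up r - 1 is the floor). *)
Definition floorR (r : R) : Z := Int_part r.
Definition ceilR (r : R) : Z := (- Int_part (- r))%Z.

(* theta is the slope of the segment from (0,0) to p = (x,y) <> (0,0):
   the angle in [0, 2*PI) of the counter-clockwise rotation taking the
   positive x-axis onto the half-line from the origin through p. *)
Definition is_slope (x y theta : R) : Prop :=
  0 <= theta < 2 * PI /\
  cos theta * sqrt (x * x + y * y) = x /\
  sin theta * sqrt (x * x + y * y) = y.

Definition P1 (t1 t2 : R) : Z * Z :=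
  let d := ceilR (/ (t2 - t1)) in
  if Rlt_dec (PI / 4) (t2 - t1) then (1%Z, 1%Z)
  else if Rlt_dec (atan (1 / 2)) (t2 - t1) then
    (if Rle_dec (PI / 4) t1 then (1%Z, 2%Z)
     else if Rle_dec (atan (1 / 2)) t1 then (1%Z, 1%Z)
     else (2%Z, 1%Z))
  else
    (if Rle_dec t2 (PI / 4) then (d, floorR (tan t1 * IZR d + 1))
     else if Rlt_dec t1 (PI / 4) then (1%Z, 1%Z)
     else (floorR (tan (PI / 2 - t2) * IZR d + 1), d)).

(* Main.v *)
Require Import Defs.
From Stdlib Require Import Reals ZArith Lra Lia.
Open Scope R_scope.

Lemma cub_slb x : 0 < x <= 1/2 -> x * cos_ub x < sin_lb x.
Proof.
intros H. unfold cos_ub, sin_lb, cos_approx, sin_approx. cbn [sum_f_R0]. unfold cos_term, sin_term.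
cbn [Nat.mul Nat.add]. rewrite !fact_simpl, !mult_INR. cbn [Factorial.fact INR].
assert (h3: 0 < x^3) by (apply pow_lt; lra).
assert (h2: x^2 <= 1/4) by nra.
assert (h4: 0 <= x^4) by (apply pow_le; lra).
assert (h6: x^6 <= 1) by (replace (x^6) with (x^2*x^2*x^2) by ring; nra).
assert (E: 0 < 1/3 - x^2/30 + x^4 *(1/720-1/5040) - x^6/40320) by lra.
assert (0 < x^3 * (1/3 - x^2/30 + x^4 *(1/720-1/5040) - x^6/40320)) by nra.
simpl pow in *. lra.
Qed.

Lemma PI_bounds : 3 < PI <= 4.
Proof. pose proof PI2_3_2; pose proof PI_4; lra. Qed.

Lemma sin_gt_xcos x : 0 < x <= 1/2 -> x * cos x < sin x.
Proof.
intros H. pose proof PI_bounds.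
destruct (SIN x) as [S _]; try lra.
destruct (COS x) as [_ C]; try lra.
pose proof (cub_slb x H). nra.
Qed.

Lemma tan_gt_id x : 0 < x <= 1/2 -> x < tan x.
Proof.
intros H. pose proof PI_bounds.
assert (c: 0 < cos x) by (apply cos_gt_0; lra).
pose proof (sin_gt_xcos x H). unfold tan.
apply (Rmult_lt_reg_r (cos x)); auto. field_simplify; lra.
Qed.

Lemma atan_half_lt : atan (1/2) < 1/2.
Proof.
pose proof PI_bounds.
rewrite <- (atan_tan (1/2)) at 2 by lra.
apply atan_increasing. apply tan_gt_id; lra.
Qed.

Lemma atan_half_gt : PI/8 < atan (1/2).
Proof.
pose proof Machin_2_3.
assert (atan (/3) < atan (/2)) by (apply atan_increasing; lra).
replace (1/2) with (/2) by field. lra.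
Qed.

Lemma atan_pos z : 0 < z -> 0 < atan z.
Proof. intros; rewrite <- atan_0; apply atan_increasing; auto. Qed.

Lemma atan2_eq : atan 2 = PI/2 - atan (1/2).
Proof. rewrite <- atan_inv by lra. f_equal; field. Qed.

Lemma tan_gap a b : 0 <= a -> a < b -> b <= PI/4 -> b - a <= 1/2 -> b - a < tan b - tan a.
Proof.
intros. pose proof PI_bounds.
assert (ca: 0 < cos a) by (apply cos_gt_0; lra).
assert (cb: 0 < cos b) by (apply cos_gt_0; lra).
rewrite tan_diff by lra.
assert (sa: 0 <= sin a) by (apply sin_ge_0; lra).
assert (sb: 0 <= sin b) by (apply sin_ge_0; lra).
pose proof (cos_minus b a).
pose proof (sin_gt_xcos (b - a) ltac:(lra)).
assert (0 < cos b * cos a) by nra.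
apply (Rmult_lt_reg_r (cos b * cos a)); auto.
unfold Rdiv. rewrite Rmult_assoc, Rinv_l by lra.
assert (0 <= sin b * sin a) by nra.
assert ((b - a) * (cos b * cos a) <= (b-a) * cos (b - a)) by nra. lra.
Qed.

Lemma floor_spec r : IZR (floorR r) <= r < IZR (floorR r) + 1.
Proof. unfold floorR. destruct (base_Int_part r). lra. Qed.

Lemma ceil_spec r : r <= IZR (ceilR r) < r + 1.
Proof. unfold ceilR. rewrite opp_IZR. destruct (base_Int_part (- r)). lra. Qed.

Lemma slope_ok (x y a b : R) : 0 < x -> 0 < y -> a < atan (y / x) -> atan (y / x) < b ->
  (x, y) <> (0, 0) /\ (exists th, is_slope x y th) /\ (forall th, is_slope x y th -> a < th < b).
Proof.
intros hx hy ha hb. pose proof PI_bounds.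
split; [intro E; injection E; lra|].
assert (Er : sqrt (x * x + y * y) = x * sqrt (1 + (y/x)²)).
{ replace (x * x + y * y) with (x² * (1 + (y/x)²)) by (unfold Rsqr; field; lra).
  rewrite sqrt_mult by (try apply Rle_0_sqr; pose proof (Rle_0_sqr (y/x)); lra).
  rewrite sqrt_Rsqr by lra. reflexivity. }
assert (sp : 0 < sqrt (1 + (y/x)²)) by (apply sqrt_lt_R0; pose proof (Rle_0_sqr (y/x)); lra).
split.
- exists (atan (y / x)). unfold is_slope.
  pose proof (atan_pos (y/x) ltac:(apply Rdiv_lt_0_compat; lra)).
  destruct (atan_bound (y/x)).
  rewrite cos_atan, sin_atan, Er. repeat split; try lra.
  all: set (s := sqrt (1 + (y / x)²)) in *; field; lra.
- intros th [[t0 t2] [hc hs]].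
  assert (rp : 0 < sqrt (x * x + y * y)) by (apply sqrt_lt_R0; nra).
  assert (cp : 0 < cos th) by nra.
  assert (sp' : 0 < sin th) by nra.
  assert (tl : th < PI / 2).
  { destruct (Rlt_le_dec th (PI/2)) as [|h]; auto.
    destruct (Rle_lt_dec th (3 * (PI/2))) as [h'|h'].
    - pose proof (cos_le_0 th h h'). lra.
    - pose proof (sin_le_0 th ltac:(lra) ltac:(lra)). lra. }
  assert (th = atan (y / x)).
  { rewrite <- (atan_tan th) by lra. f_equal. unfold tan.
    set (r := sqrt (x * x + y * y)) in *. rewrite <- hc, <- hs. field. split; lra. }
  subst th. lra.
Qed.

Lemma grid (s1 s2 : R) : 0 <= s1 -> s1 < s2 -> s2 <= PI/4 -> s2 - s1 <= atan (1/2) ->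
  let d := ceilR (/ (s2 - s1)) in
  let y := floorR (tan s1 * IZR d + 1) in
  (0 < y)%Z /\ (y <= d)%Z /\ 0 < IZR d /\ s1 < atan (IZR y / IZR d) < s2 /\
  IZR d <= PI / 2 * / (s2 - s1).
Proof.
intros h0 h1 h2 h3 d y. pose proof PI_bounds. pose proof atan_half_lt.
set (de := s2 - s1) in *.
assert (dep : 0 < de) by (unfold de; lra).
pose proof (ceil_spec (/ de)) as [c1 c2]. fold d in c1, c2.
assert (ig : 2 < / de).
{ replace 2 with (/ (1/2)) by field. apply Rinv_lt_contravar; nra. }
assert (dp : 0 < IZR d) by lra.
pose proof (floor_spec (tan s1 * IZR d + 1)) as [f1 f2]. fold y in f1, f2.
assert (t1p : 0 <= tan s1).
{ destruct (Req_dec s1 0) as [e|e]. rewrite e, tan_0; lra.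
  left; apply tan_gt_0; lra. }
assert (ts2 : tan s1 + de < tan s2) by (pose proof (tan_gap s1 s2 h0 h1 h2 ltac:(unfold de in *; lra)); unfold de in *; lra).
assert (ts2' : tan s2 <= 1) by (rewrite <- tan_PI4; apply tan_incr_1; lra).
assert (invd : / IZR d <= de).
{ rewrite <- (Rinv_inv de). apply Rinv_le_contravar; lra. }
assert (yd1 : tan s1 < IZR y / IZR d).
{ apply (Rmult_lt_reg_r (IZR d)); auto. unfold Rdiv; rewrite Rmult_assoc, Rinv_l by lra. lra. }
assert (yd2 : IZR y / IZR d < tan s2).
{ assert (IZR y / IZR d <= tan s1 + / IZR d).
  { apply (Rmult_le_reg_r (IZR d)); auto. unfold Rdiv; rewrite Rmult_plus_distr_r, !Rmult_assoc, Rinv_l by lra. lra. }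
  lra. }
split. { apply lt_IZR. assert (0 <= tan s1 * IZR d) by (apply Rmult_le_pos; lra). lra. }
split. { apply le_IZR. assert (IZR y / IZR d < 1) by lra.
  apply (Rmult_lt_compat_r (IZR d)) in H1; auto. unfold Rdiv in H1. rewrite Rmult_assoc, Rinv_l in H1 by lra. lra. }
split; auto.
split. split.
- rewrite <- (atan_tan s1) by lra. apply atan_increasing; auto.
- rewrite <- (atan_tan s2) by lra. apply atan_increasing; auto.
- assert (1 <= (PI/2 - 1) * / de).
  { apply (Rmult_le_reg_r de); auto. rewrite Rmult_assoc, Rinv_l by lra. lra. }
  lra.
Qed.

Lemma bound_k k t1 t2 : t1 < t2 -> k * (t2 - t1) <= PI/2 -> k <= PI / 2 * / (t2 - t1).
Proof.
intros. apply (Rmult_le_reg_r (t2 - t1)); [lra|]. rewrite Rmult_assoc, Rinv_l by lra. lra.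
Qed.

Lemma atan11 : atan (1 / 1) = PI / 4.
Proof. replace (1/1) with 1 by field. exact atan_1. Qed.

Theorem lemma3 (t1 t2 : R) (h1 : 0 <= t1) (h12 : t1 < t2) (h2 : t2 <= PI / 2) :
  let p := P1 t1 t2 in
  (IZR (fst p), IZR (snd p)) <> (0, 0) /\
  (exists theta, is_slope (IZR (fst p)) (IZR (snd p)) theta) /\
  (forall theta, is_slope (IZR (fst p)) (IZR (snd p)) theta -> t1 < theta < t2) /\
  IZR (Z.max (fst p) (snd p)) <= PI / 2 * / (t2 - t1).
Proof.
intro p. unfold p, P1. cbv zeta.
pose proof PI_bounds. pose proof atan_half_lt. pose proof atan_half_gt.
assert (ah0 : 0 < atan (1/2)) by (apply atan_pos; lra).
destruct (Rlt_dec (PI / 4) (t2 - t1)) as [c1|c1].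
{ cbn [fst snd Z.max Z.compare Pos.compare Pos.compare_cont]. destruct (slope_ok 1 1 t1 t2) as [A [B C]]; try lra; try rewrite atan11; try lra.
  refine (conj A (conj B (conj C _))). apply bound_k; lra. }
destruct (Rlt_dec (atan (1 / 2)) (t2 - t1)) as [c2|c2].
{ destruct (Rle_dec (PI / 4) t1) as [c3|c3].
  { cbn [fst snd Z.max Z.compare Pos.compare Pos.compare_cont].
    assert (E2 : atan (2/1) = PI/2 - atan (1/2)) by (replace (2/1) with 2 by field; apply atan2_eq).
    destruct (slope_ok 1 2 t1 t2) as [A [B C]]; try lra; try rewrite E2; try lra.
    refine (conj A (conj B (conj C _))). apply bound_k; lra. }
  destruct (Rle_dec (atan (1 / 2)) t1) as [c4|c4].
  { cbn [fst snd Z.max Z.compare Pos.compare Pos.compare_cont]. destruct (slope_ok 1 1 t1 t2) as [A [B C]]; try lra; try rewrite atan11; try lra.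
    refine (conj A (conj B (conj C _))). apply bound_k; lra. }
  { cbn [fst snd Z.max Z.compare Pos.compare Pos.compare_cont]. destruct (slope_ok 2 1 t1 t2) as [A [B C]]; try lra.
    refine (conj A (conj B (conj C _))). apply bound_k; lra. } }
destruct (Rle_dec t2 (PI / 4)) as [c5|c5].
{ destruct (grid t1 t2 h1 h12 c5 ltac:(lra)) as [y0 [yd [dp [[sa sb] bd]]]].
  cbn [fst snd Z.max Z.compare Pos.compare Pos.compare_cont]. destruct (slope_ok (IZR (ceilR (/ (t2 - t1)))) (IZR (floorR (tan t1 * IZR (ceilR (/ (t2 - t1))) + 1))) t1 t2) as [A [B C]]; auto.
  { apply IZR_lt in y0. auto. }
  refine (conj A (conj B (conj C _))). rewrite Z.max_l by lia. auto. }
destruct (Rlt_dec t1 (PI / 4)) as [c6|c6].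
{ cbn [fst snd Z.max Z.compare Pos.compare Pos.compare_cont]. destruct (slope_ok 1 1 t1 t2) as [A [B C]]; try lra; try rewrite atan11; try lra.
  refine (conj A (conj B (conj C _))). apply bound_k; lra. }
pose proof (grid (PI/2 - t2) (PI/2 - t1) ltac:(lra) ltac:(lra) ltac:(lra) ltac:(lra)) as G.
replace (PI / 2 - t1 - (PI / 2 - t2)) with (t2 - t1) in G by ring. cbv zeta in G.
destruct G as [y0 [yd [dp [[sa sb] bd]]]].
set (d := ceilR (/ (t2 - t1))) in *.
set (x := floorR (tan (PI / 2 - t2) * IZR d + 1)) in *.
apply IZR_lt in y0.
assert (E : atan (IZR d / IZR x) = PI / 2 - atan (IZR x / IZR d)).
{ rewrite <- atan_inv by (apply Rdiv_lt_0_compat; lra). f_equal. field; lra. }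
cbn [fst snd Z.max Z.compare Pos.compare Pos.compare_cont]. destruct (slope_ok (IZR x) (IZR d) t1 t2) as [A [B C]]; auto; try rewrite E; try lra.
refine (conj A (conj B (conj C _))). rewrite Z.max_r by lia. auto.
Qed.
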